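(* Let $L=\{x: Ax\le b\}$ be a full-dimensional rational polytope in $\mathbb{R}^m$, $m\ge2$, where $A$ is an integral matrix with rows $a_1,\dots,a_n$ and $b$ is an integral vector. Suppose $a_1x\le b_1$ defines a facet of $L$ and its affine hull $\{x: a_1x=b_1\}$ contains no integer point. Let $\tilde A$ be $A$ with row $a_1$ removed and $\tilde b$ be $b$ with its first component removed. Then there exists a rational inequality $a'x\le b'$ such that $\tilde L:=\{x:\tilde Ax\le\tilde b,\ a'x\le b'\}$ contains the same integer points as $L$, $L\subseteq\tilde L$, and the hyperplane $\{x: a'x=b'\}$ contains integer points. *)

(* Defs.v *)
From HB Require Import structures.
From mathcomp Require Import all_boot all_order all_algebra.
From mathcomp Require Import reals.
Set Implicit Arguments. Unset Strict Implicit. Unset Printing Implicit Defensive.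
Import Order.TTheory GRing.Theory Num.Theory.
Local Open Scope ring_scope.

Section PolyDefs.
Variables (R : realType) (m : nat).

Definition dotv (a : 'rV[R]_m) (x : 'cV[R]_m) : R := (a *m x) 0 0.

Definition introw n (A : 'M[int]_(n, m)) (i : 'I_n) : 'rV[R]_m :=
  map_mx (fun z : int => z%:~R) (row i A).

Definition in_polyh n (A : 'M[int]_(n, m)) (b : 'cV[int]_n) (x : 'cV[R]_m) : Prop :=
  forall i, dotv (introw A i) x <= (b i 0)%:~R.

Definition integral_pt (x : 'cV[R]_m) : Prop := forall i, x i 0 \is a Num.int.

Definition bounded_polyh n (A : 'M[int]_(n, m)) (b : 'cV[int]_n) : Prop :=
  exists M : R, forall x, in_polyh A b x -> forall i, `|x i 0| <= M.

Definition full_dim n (A : 'M[int]_(n, m)) (b : 'cV[int]_n) : Prop :=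
  exists (x : 'cV[R]_m) (e : R), 0 < e /\
    forall y : 'cV[R]_m, (forall i, `|y i 0 - x i 0| < e) -> in_polyh A b y.

Definition face_of n (A : 'M[int]_(n, m)) (b : 'cV[int]_n) (i0 : 'I_n)
  (x : 'cV[R]_m) : Prop :=
  in_polyh A b x /\ dotv (introw A i0) x = (b i0 0)%:~R.

(* row i0 defines a facet: the face is proper and has dimension m-1,
   i.e. it contains m affinely independent points x0, x0 + d_1, ..., x0 + d_{m-1}
   (d_k the rows of a rank m-1 matrix D). *)
Definition is_facet n (A : 'M[int]_(n, m)) (b : 'cV[int]_n) (i0 : 'I_n) : Prop :=
  (exists x, in_polyh A b x /\ dotv (introw A i0) x < (b i0 0)%:~R) /\
  exists (x0 : 'cV[R]_m) (D : 'M[R]_(m.-1, m)),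
    [/\ face_of A b i0 x0,
        (forall k, face_of A b i0 (x0 + (row k D)^T)) &
        \rank D = m.-1].

End PolyDefs.

(* Main.v *)
Require Import Defs.
From HB Require Import structures.
From mathcomp Require Import all_boot all_order all_algebra.
From mathcomp Require Import reals.
From mathcomp Require Import zify ring lra.
Import Order.TTheory GRing.Theory Num.Theory.
Local Open Scope ring_scope.

Section H.
Variables (R : realType) (m : nat).
Implicit Types (a : 'rV[R]_m) (x y : 'cV[R]_m).

Lemma dotvE a x : dotv a x = \sum_c a 0 c * x c 0.
Proof. by rewrite /dotv mxE. Qed.
Lemma dotvDr a x y : dotv a (x + y) = dotv a x + dotv a y.
Proof. by rewrite /dotv mulmxDr mxE. Qed.
Lemma dotvZr a c x : dotv a (c *: x) = c * dotv a x.
Proof. by rewrite /dotv -scalemxAr mxE. Qed.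
Lemma dotvBr a x y : dotv a (x - y) = dotv a x - dotv a y.
Proof. by rewrite /dotv mulmxBr !mxE. Qed.
Lemma dotv_delta a l : dotv a (delta_mx l 0) = a 0 l.
Proof.
rewrite dotvE (bigD1 l) //= big1 ?addr0 => [|c hc]; rewrite !mxE ?eqxx ?mulr1 //.
by rewrite (negbTE hc) mulr0.
Qed.
Lemma introwE n (A : 'M[int]_(n, m)) i c : introw R A i 0 c = (A i c)%:~R.
Proof. by rewrite /introw !mxE. Qed.
Lemma dotv_int n (A : 'M[int]_(n, m)) i x : integral_pt x -> dotv (introw R A i) x \is a Num.int.
Proof.
move=> hx; rewrite dotvE; apply: rpred_sum => c _; apply: rpredM; last exact: hx.
by rewrite introwE intr_int.
Qed.
Lemma int_gt (y : R) (b : int) : y \is a Num.int -> b%:~R < y -> (b + 1)%:~R <= y.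
Proof.
move=> /intrP [z ->]; rewrite ltr_int ler_int; lia.
Qed.
End H.

Theorem lemma7 (R : realType) (m n : nat)
  (A : 'M[int]_(n.+1, m)) (b : 'cV[int]_n.+1) :
  (2 <= m)%N ->
  bounded_polyh R A b ->
  full_dim R A b ->
  is_facet R A b ord0 ->
  ~ (exists z : 'cV[R]_m, integral_pt z /\ dotv (introw R A ord0) z = (b ord0 0)%:~R) ->
  exists (a' : 'rV[rat]_m) (b' : rat),
    let Ltilde (x : 'cV[R]_m) : Prop :=
      (forall i : 'I_n,
          dotv (introw R A (lift ord0 i)) x <= (b (lift ord0 i) 0)%:~R) /\
      dotv (map_mx ratr a') x <= ratr b' in
    [/\ a' != 0,
        (forall x : 'cV[R]_m, integral_pt x -> (in_polyh A b x <-> Ltilde x)),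
        (forall x : 'cV[R]_m, in_polyh A b x -> Ltilde x) &
        exists z : 'cV[R]_m, integral_pt z /\ dotv (map_mx ratr a') z = ratr b'].
Proof.
move=> hm [Mb hMb] _ [[x1 [hx1 hx1lt]] [x0 [D [[hx0 hx0eq] _ _]]]] _.
have [k hk] : exists k, A ord0 k != 0.
  case: (pickP (fun k => A ord0 k != 0)) => [k hk|h0]; first by exists k.
  exfalso.
  have z : forall x, dotv (introw R A ord0) x = 0.
    move=> x; rewrite dotvE big1 // => c _; rewrite introwE.
    by move/negbFE/eqP: (h0 c) ->; rewrite mul0r.
  rewrite z in hx1lt; rewrite z in hx0eq; rewrite -hx0eq in hx1lt.
  by rewrite ltxx in hx1lt.
have [l hlk] : exists l : 'I_m, l != k.
  case: k {hk} => kv kp.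
  case: (eqVneq kv 0%N) => hk0.
    have h1 : (1 < m)%N by [].
    by exists (Ordinal h1); apply/eqP => /(congr1 val) /=; rewrite hk0.
  have h1 : (0 < m)%N by apply: leq_trans hm.
  by exists (Ordinal h1); apply/eqP => /(congr1 val) /= h; rewrite -h eqxx in hk0.
have [j hj] : exists j, A ord0 k * A (lift ord0 j) l - A ord0 l * A (lift ord0 j) k != 0.
  case: (pickP (fun j => A ord0 k * A (lift ord0 j) l - A ord0 l * A (lift ord0 j) k != 0))
    => [j hj|h0]; first by exists j.
  exfalso.
  pose dv : 'cV[R]_m := (A ord0 k)%:~R *: delta_mx l 0 - (A ord0 l)%:~R *: delta_mx k 0.
  have hdv : forall i, dotv (introw R A i) dv = 0.
    move=> i; rewrite dotvBr !dotvZr !dotv_delta !introwE.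
    case: (unliftP ord0 i) => [j'|] ->.
      by rewrite -!intrM -intrB; move/negbFE/eqP: (h0 j') ->.
    by rewrite mulrC subrr.
  pose t := (Mb - x1 l 0 + 1) / (A ord0 k)%:~R.
  have hy : in_polyh A b (x1 + t *: dv).
    by move=> i; rewrite dotvDr dotvZr hdv mulr0 addr0; exact: hx1 i.
  have := hMb _ hy l.
  have hk' : (A ord0 k)%:~R != 0 :> R by rewrite intr_eq0.
  rewrite !mxE eqxx (negbTE hlk) /= mulr1 mulr0 subr0 /t divfK //.
  have := ler_norm (x1 l 0 + (Mb - x1 l 0 + 1)).
  lra.
set a1k := A ord0 k in hj hk *; set a1l := A ord0 l in hj *.
set ajk := A (lift ord0 j) k in hj *; set ajl := A (lift ord0 j) l in hj *.
set M := a1k * ajl - a1l * ajk in hj.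
pose S := \sum_c `|(A (lift ord0 j) c)%:~R : R| * `|Mb|.
have S0 : 0 <= S by apply: sumr_ge0 => c _; rewrite mulr_ge0.
pose K := Num.bound S.
have hK : forall x, in_polyh A b x -> - dotv (introw R A (lift ord0 j)) x <= K%:R.
  move=> x hx; apply: le_trans (ltW (archi_boundP S0)).
  apply: le_trans (ler_norm _) _; rewrite normrN dotvE.
  apply: le_trans (ler_norm_sum _ _ _) _.
  apply: ler_sum => c _; rewrite normrM introwE ler_wpM2l //.
  exact: le_trans (hMb x hx c) (ler_norm _).
set b1 := b ord0 0 in hx1lt hx0eq *.
set bj := b (lift ord0 j) 0.
pose N : int := (K%:Z + (`|M|%N)%:Z + (`|bj|%N)%:Z)%R.
have N0 : 0 <= N by rewrite /N; lia.
pose p := N * a1k - ajk; pose q := N * a1l - ajl.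
have hMpq : M = a1l * p - a1k * q by rewrite /M /p /q; ring.
pose d := gcdz p q.
have [u [v huv]] := Bezoutz p q.
have hdM : (d %| M)%Z by rewrite hMpq rpredB // ?dvdz_mull // ?dvdz_gcdl // dvdz_gcdr.
have d0 : d != 0.
  by apply/eqP => hd; move: hdM; rewrite hd dvd0z (negbTE hj).
have dpos : 0 < d by rewrite lt_def d0 /d /gcdz.
have dleM : d <= (`|M|%N)%:Z.
  have : (`|d| <= `|M|)%N by apply: dvdn_leq; [rewrite absz_gt0 | exact: hdM].
  lia.
pose s := N * b1 + K%:Z.
pose w := s + d - 1.
pose t := (w %/ d)%Z.
have hw := divz_eq w d.
have r0 := modz_ge0 w d0.
have r1 := ltz_mod w d0.
have hts1 : s <= t * d by rewrite /t; lia.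
have hts2 : t * d < N * (b1 + 1) - bj by rewrite /t /s /w /N in hw r1 *; lia.
pose a' : 'rV[rat]_m := \row_c ((N * A ord0 c - A (lift ord0 j) c)%:~R).
have ha' : forall x, dotv (map_mx ratr a') x =
    N%:~R * dotv (introw R A ord0) x - dotv (introw R A (lift ord0 j)) x.
  move=> x; rewrite !dotvE mulr_sumr -sumrB; apply: eq_bigr => c _.
  rewrite !mxE ratr_int ?introwE intrB intrM; ring.
exists a', (t * d)%:~R; rewrite /= ratr_int.
have hNR : (0 : R) <= N%:~R by rewrite ler0z.
have hL : forall x : 'cV[R]_m, in_polyh A b x -> dotv (map_mx ratr a') x <= (t * d)%:~R.
  move=> x hx; rewrite ha'.
  have h1 := ler_wpM2l hNR (hx ord0).
  have h2 := hK x hx.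
  have : (s%:~R : R) <= (t * d)%:~R by rewrite ler_int.
  rewrite /s intrD intrM /=; lra.
split.
- apply/negP => /eqP h.
  have := congr1 (fun B : 'rV[rat]_m => B 0 k) h; rewrite !mxE => /eqP; rewrite intr_eq0 => /eqP hp.
  have := congr1 (fun B : 'rV[rat]_m => B 0 l) h; rewrite !mxE => /eqP; rewrite intr_eq0 => /eqP hq.
  by move: hj; rewrite hMpq /p /q /a1k /a1l /ajk /ajl hp hq !mulr0 subrr eqxx.
- move=> x hx; split.
    by move=> hin; split; [move=> i; exact: hin | exact: hL].
  move=> [hot hlast] i.
  case: (unliftP ord0 i) => [i'|] ->; first exact: hot.
  rewrite leNgt; apply/negP => hgt.
  have h1 := int_gt _ _ _ (dotv_int _ _ _ A ord0 x hx) hgt.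
  have h1' := ler_wpM2l hNR h1.
  have h2 := hot j.
  rewrite ha' in hlast.
  have : ((t * d)%:~R : R) < (N * (b1 + 1) - bj)%:~R by rewrite ltr_int.
  rewrite -/bj in h2.
  rewrite intrB !intrM intrD /=; lra.
- by move=> x hx; split; [move=> i; exact: hx | exact: hL].
exists ((t * u)%:~R *: delta_mx k 0 + (t * v)%:~R *: delta_mx l 0).
split.
  move=> i; rewrite !mxE.
  by apply: rpredD; apply: rpredM; rewrite ?intr_int // rpred_nat.
rewrite dotvDr !dotvZr !dotv_delta !mxE !ratr_int -!intrM -intrD.
congr intr; rewrite /d -huv /p /q /a1k /a1l /ajk /ajl; ring.
Qed.
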